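(* Let $G$ be a connected graph with vertex set $\{v_1,\dots,v_n\}$ and let $G^+$ be obtained from $G$ by adding new vertices $v_1^+,\dots,v_n^+$ and edges $v_iv_i^+$ ($i=1,\dots,n$). Let $Q$ be a clique separator of $G^+$ and let $M$ be the $Q$-attachedness graph of $G^+$. Then $M$ has no full antipodal triangle and no induced copy of $W^{(0)}_{2k+1}$ for any $k\ge 1$ if and only if $M$ has no induced copy of $W^{(0)}_{2k+1}$ for any $k\ge 1$.
   Context: Graphs are finite and simple. A clique is an inclusion-maximal set of pairwise adjacent vertices. For a connected graph $X$, a clique $Q$ of $X$ is a clique separator if $X-Q$ has at least two connected components; if their vertex sets are $V_1,\dots,V_s$, put $\gamma_i=X[V_i\cup Q]$ and $\Gamma_Q=\{\gamma_1,\dots,\gamma_s\}$. A relevant clique of $\gamma\in\Gamma_Q$ is a clique $K$ of the graph $\gamma$ with $K\cap Q\neq\emptyset$ and $K\neq Q$. An element $\gamma$ is a neighboring subgraph of a vertex $v$ if $v$ belongs to some relevant clique of $\gamma$; a set $W\subseteq\Gamma_Q$ is neighboring if there is $v\in Q$ such that every member of $W$ is a neighboring subgraph of $v$. Relations on $\Gamma_Q$: attachedness $\gamma\bowtie\gamma'$ iff there are relevant cliques $K$ of $\gamma$ and $K'$ of $\gamma'$ with $K\cap K'\cap Q\neq\emptyset$; dominance $\gamma\le\gamma'$ iff $\gamma\bowtie\gamma'$ and, for each relevant clique $K'$ of $\gamma'$, either $K\cap Q\subseteq K'\cap Q$ for every relevant clique $K$ of $\gamma$, or $K\cap K'\cap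 Q=\emptyset$ for every relevant clique $K$ of $\gamma$; antipodality $\gamma\leftrightarrow\gamma'$ iff there are relevant cliques $K$ of $\gamma$ and $K'$ of $\gamma'$ with $K\cap K'\cap Q\neq\emptyset$ and $K\cap Q$, $K'\cap Q$ inclusion-wise incomparable. Dominance is a preorder; by standing convention, elements $\gamma,\gamma'$ with $\gamma\le\gamma'$ and $\gamma'\le\gamma$ are identified (attachedness, antipodality and being neighboring are compatible with this identification). The $Q$-attachedness graph $M$ has vertex set $\Gamma_Q$ and an edge $\gamma\gamma'$ for each pair of distinct attached elements; it is 2-edge-colored: the edge is antipodal if $\gamma\leftrightarrow\gamma'$ and a dominance edge otherwise (then $\gamma\le\gamma'$ or $\gamma'\le\gamma$). A triangle of $M$ is full if its vertex set is a neighboring set; a full antipodal triangle is a full triangle all of whose edges are antipodal. $W^{(0)}_{2k+1}$ ($k\ge1$) is the 2-edge-colored wheel with hub $c$ and rim vertices $x_1,\dots,x_{2k+1}$, rim edges $x_ix_{i+1}$ (indices mod $2k+1$) antipodal and all spokes $cx_i$ dominance edges. An induced copy of a 2-edge-colored graph $F$ in $M$ is an injective map from $V(F)$ to $V(M)$ such that two vertices are adjacent in $F$ iff their images are adjacent in $M$, with the same edge color. *)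

(* Defs.v *)
From mathcomp Require Import all_boot.
Set Implicit Arguments. Unset Strict Implicit. Unset Printing Implicit Defensive.

(* A finite simple graph is a symmetric irreflexive relation [adj] on a finType V. *)

Definition complete (V : finType) (adj : rel V) (K : {set V}) : bool :=
  [forall x in K, forall y in K, (x != y) ==> adj x y].

Definition is_clique_in (V : finType) (adj : rel V) (S K : {set V}) : bool :=
  maxset (fun K' : {set V} => (K' \subset S) && complete adj K') K.

Definition is_clique (V : finType) (adj : rel V) (K : {set V}) : bool :=
  is_clique_in adj [set: V] K.

Definition adj_minus (V : finType) (adj : rel V) (Q : {set V}) : rel V :=
  fun x y => [&& adj x y, x \notin Q & y \notin Q].

Definition components (V : finType) (adj : rel V) (Q : {set V}) : {set {set V}} :=
  [set [set y | connect (adj_minus adj Q) x y] | x in ~: Q].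

Definition clique_separator (V : finType) (adj : rel V) (Q : {set V}) : bool :=
  is_clique adj Q && (1 < #|components adj Q|).

(* Gamma_Q: each gamma_i = X[V_i ∪ Q] is represented by its vertex set V_i ∪ Q. *)
Definition GammaQ (V : finType) (adj : rel V) (Q : {set V}) : {set {set V}} :=
  [set C :|: Q | C in components adj Q].

Definition relevant (V : finType) (adj : rel V) (Q S K : {set V}) : bool :=
  [&& is_clique_in adj S K, K :&: Q != set0 & K != Q].

Definition neighboring_sub (V : finType) (adj : rel V) (Q g : {set V}) (v : V) : bool :=
  [exists K : {set V}, relevant adj Q g K && (v \in K)].

Definition attached (V : finType) (adj : rel V) (Q g g' : {set V}) : bool :=
  [exists K : {set V}, exists K' : {set V},
     [&& relevant adj Q g K, relevant adj Q g' K' & K :&: K' :&: Q != set0]].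

Definition dominated (V : finType) (adj : rel V) (Q g g' : {set V}) : bool :=
  attached adj Q g g' &&
  [forall K' : {set V}, relevant adj Q g' K' ==>
     ([forall K : {set V}, relevant adj Q g K ==> (K :&: Q \subset K' :&: Q)]
      || [forall K : {set V}, relevant adj Q g K ==> (K :&: K' :&: Q == set0)])].

Definition antipodal (V : finType) (adj : rel V) (Q g g' : {set V}) : bool :=
  [exists K : {set V}, exists K' : {set V},
     [&& relevant adj Q g K, relevant adj Q g' K', K :&: K' :&: Q != set0,
         ~~ (K :&: Q \subset K' :&: Q) & ~~ (K' :&: Q \subset K :&: Q)]].

Definition identified (V : finType) (adj : rel V) (Q g g' : {set V}) : bool :=
  (g == g') || (dominated adj Q g g' && dominated adj Q g' g).

Inductive ecol := Antipodal | Dominance.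

(* colour of the pair {[g],[g']} in the Q-attachedness graph M (None = no edge) *)
Definition mcol (V : finType) (adj : rel V) (Q g g' : {set V}) : option ecol :=
  if attached adj Q g g' && ~~ identified adj Q g g'
  then Some (if antipodal adj Q g g' then Antipodal else Dominance)
  else None.

(* induced copy of a 2-edge-coloured graph F (vertex type VF, colour map F) in M;
   vertices of M are elements of Gamma_Q up to identification *)
Definition induced_copy (VF : finType) (F : VF -> VF -> option ecol)
    (V : finType) (adj : rel V) (Q : {set V}) : Prop :=
  exists f : VF -> {set V},
    (forall x, f x \in GammaQ adj Q) /\
    (forall x y, x != y -> ~~ identified adj Q (f x) (f y)) /\
    (forall x y, x != y -> mcol adj Q (f x) (f y) = F x y).

(* the wheel W^{(0)}_{2k+1}: hub = None, rim vertices Some i, i : 'I_(2k+1) *)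
Definition wheel0 (k : nat) (x y : option 'I_(k.*2.+1)) : option ecol :=
  match x, y with
  | None, None => None
  | None, Some _ | Some _, None => Some Dominance
  | Some i, Some j =>
      if (i.+1 %% k.*2.+1 == j) || (j.+1 %% k.*2.+1 == i) then Some Antipodal else None
  end.

Definition has_full_antipodal_triangle (V : finType) (adj : rel V) (Q : {set V}) : Prop :=
  exists g1 g2 g3 : {set V},
    [/\ g1 \in GammaQ adj Q, g2 \in GammaQ adj Q & g3 \in GammaQ adj Q] /\
    [/\ mcol adj Q g1 g2 = Some Antipodal, mcol adj Q g2 g3 = Some Antipodal
      & mcol adj Q g1 g3 = Some Antipodal] /\
    exists2 v, v \in Q &
      [&& neighboring_sub adj Q g1 v, neighboring_sub adj Q g2 v & neighboring_sub adj Q g3 v].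

(* G^+ : vertex v_i = inl i, pendant vertex v_i^+ = inr i *)
Definition plus_adj (T : finType) (e : rel T) : rel (T + T) :=
  fun u w => match u, w with
  | inl x, inl y => e x y
  | inl x, inr y => x == y
  | inr x, inl y => x == y
  | inr _, inr _ => false
  end.

(* Main.v *)
Require Import Defs.
From mathcomp Require Import all_boot.
Set Implicit Arguments. Unset Strict Implicit.

Section Gen.
Variables (V : finType) (adj : rel V) (Q : {set V}).

Lemma three_in2 (x y z w u : V) : z \in [set x; y] -> w \in [set x;y] -> u \in [set x;y] ->
  z != w -> z != u -> w != u -> False.
Proof.
by rewrite !inE => /orP[]/eqP-> /orP[]/eqP-> /orP[]/eqP->; rewrite ?eqxx.
Qed.

Lemma attached_sym g g' : attached adj Q g g' -> attached adj Q g' g.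
Proof.
move=> /existsP[K /existsP[K' /and3P[h1 h2 h3]]].
apply/existsP; exists K'; apply/existsP; exists K.
by rewrite h1 h2 (setIC K').
Qed.

Lemma attachedC g g' : attached adj Q g g' = attached adj Q g' g.
Proof. by apply/idP/idP; apply: attached_sym. Qed.

Lemma antipodal_sym g g' : antipodal adj Q g g' -> antipodal adj Q g' g.
Proof.
move=> /existsP[K /existsP[K' /and5P[h1 h2 h3 h4 h5]]].
apply/existsP; exists K'; apply/existsP; exists K.
by rewrite h1 h2 (setIC K') h3 h4 h5.
Qed.

Lemma antipodalC g g' : antipodal adj Q g g' = antipodal adj Q g' g.
Proof. by apply/idP/idP; apply: antipodal_sym. Qed.

Lemma identifiedC g g' : identified adj Q g g' = identified adj Q g' g.
Proof. by rewrite /identified eq_sym andbC. Qed.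

Lemma mcolC g g' : mcol adj Q g g' = mcol adj Q g' g.
Proof. by rewrite /mcol attachedC identifiedC antipodalC. Qed.

Lemma mcol_antiP g g' : mcol adj Q g g' = Some Antipodal ->
  [/\ attached adj Q g g', ~~ identified adj Q g g' & antipodal adj Q g g'].
Proof.
rewrite /mcol; case: ifP => // /andP[a b]; case: ifP => // c _; by split.
Qed.

Lemma no_anti2 x y g g' : Q \subset [set x; y] -> ~~ antipodal adj Q g g'.
Proof.
move=> sQ; apply/negP => /existsP[K /existsP[K' /and5P[_ _ ne n1 n2]]].
move/set0Pn: ne => [z]; rewrite !inE => /andP[/andP[zK zK'] zQ].
move/subsetPn: n1 => [w]; rewrite !inE => /andP[wK wQ]; rewrite wQ andbT => wK'.
move/subsetPn: n2 => [u]; rewrite !inE => /andP[uK' uQ]; rewrite uQ andbT => uK.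
apply: (@three_in2 x y z w u (subsetP sQ _ zQ) (subsetP sQ _ wQ) (subsetP sQ _ uQ)).
- by apply/eqP => ezw; rewrite -ezw zK' in wK'.
- by apply/eqP => ezu; rewrite -ezu zK in uK.
- by apply/eqP => ewu; rewrite -ewu wK in uK.
Qed.

Lemma single_anti x g g' : (forall K, relevant adj Q g K -> K :&: Q \subset [set x]) ->
  ~~ antipodal adj Q g g'.
Proof.
move=> H; apply/negP => /existsP[K /existsP[K' /and5P[r1 _ ne n1 _]]].
move/set0Pn: ne => [z]; rewrite !inE => /andP[/andP[zK zK'] zQ].
have s1 := H _ r1.
have : z \in [set x] by apply: (subsetP s1); rewrite inE zK zQ.
rewrite inE => /eqP ezx.
move/negP: n1; apply; apply/subsetP => t tKQ.
have := subsetP s1 _ tKQ; rewrite inE => /eqP ->.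
by rewrite inE -ezx zK' zQ.
Qed.

End Gen.

Section Plus.
Variables (T : finType) (e : rel T).
Local Notation A := (plus_adj e).

Lemma pendant (K : {set T + T}) a : complete A K -> inr a \in K ->
  K \subset [set inl a; inr a].
Proof.
move=> Hc Ha; apply/subsetP => y yK.
case: (eqVneq y (inr a)) => [->|ne]; first by rewrite !inE eqxx orbT.
move/forall_inP: Hc => /(_ _ Ha)/forall_inP/(_ _ yK).
rewrite eq_sym ne /=.
by case: y {yK ne} => [y|y] //= /eqP <-; rewrite !inE eqxx.
Qed.

Lemma clique_complete S K : is_clique_in A S K -> (K \subset S) && complete A K.
Proof. by case/maxsetP. Qed.

Lemma hub_facts (Q : {set T + T}) a :
  complete A Q -> inl a \in Q -> inr a \notin Q ->
  let h := [set inr a] :|: Q in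
  [/\ relevant A Q h [set inl a; inr a],
      (forall K, relevant A Q h K -> K :&: Q \subset [set inl a]) &
      h \in GammaQ A Q].
Proof.
move=> cQ aQ naQ h; split.
- rewrite /relevant; apply/and3P; split.
  + apply/maxsetP; split.
    * apply/andP; split.
        by apply/subsetP => x; rewrite !inE => /orP[]/eqP->; rewrite ?eqxx ?aQ ?orbT.
      apply/forall_inP => x; rewrite !inE => /orP[]/eqP->;
      apply/forall_inP => y; rewrite !inE => /orP[]/eqP->; by rewrite /= ?eqxx.
    * move=> B /andP[_ cB] sB; apply/eqP; rewrite eqEsubset sB andbT.
      apply: pendant cB _; apply: (subsetP sB); by rewrite !inE eqxx orbT.
  + by apply/set0Pn; exists (inl a); rewrite !inE eqxx aQ.
  + by apply/eqP => E; move: naQ; rewrite -E !inE eqxx orbT.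
- move=> K /and3P[cK _ nKQ].
  have /andP[sKh cKc] := clique_complete cK.
  have rK : inr a \in K.
    apply/negPn/negP => nr; move/maxsetP: cK => [_ mx].
    have sKQ : K \subset Q.
      apply/subsetP => x xK; have := subsetP sKh _ xK; rewrite !inE => /orP[/eqP ex|//].
      by rewrite -ex xK in nr.
    have E := mx Q; rewrite E ?eqxx // in nKQ.
    apply/andP; split=> //; apply/subsetP => x xQ; by rewrite !inE xQ orbT.
  apply/subsetP => x; rewrite in_setI => /andP[xK xQ].
  have := subsetP (pendant cKc rK) _ xK; rewrite !inE => /orP[//|/eqP ex].
  by rewrite -ex xQ in naQ.
- apply/imsetP; exists [set inr a] => //.
  apply/imsetP; exists (inr a); first by rewrite inE.
  apply/setP => y; rewrite !inE; apply/idP/idP => [/eqP->|]; first exact: connect0.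
  move/connectP => [[|z p] /= ];  first by move=> _ ->.
  move=> /andP[/and3P[hz _ zQ] _] _.
  by case: z hz zQ => [z|z] //= /eqP <-; rewrite aQ.
Qed.

End Plus.

Lemma hub_ok (V : finType) (adj : rel V) (Q : {set V}) h x K0 g g' :
  relevant adj Q h K0 -> x \in K0 -> x \in Q ->
  (forall K, relevant adj Q h K -> K :&: Q \subset [set x]) ->
  neighboring_sub adj Q g x -> antipodal adj Q g g' ->
  [/\ ~~ identified adj Q h g, mcol adj Q h g = Some Dominance
    & mcol adj Q g h = Some Dominance].
Proof.
move=> r0 x0 xQ Hh /existsP[K /andP[rK xK]] ag.
have nah : ~~ antipodal adj Q h g by apply: single_anti Hh.
have at1 : attached adj Q h g.
  apply/existsP; exists K0; apply/existsP; exists K; rewrite r0 rK /=.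
  by apply/set0Pn; exists x; rewrite !inE x0 xK xQ.
have nid : ~~ identified adj Q h g.
  rewrite /identified negb_or; apply/andP; split.
    apply/eqP => E; move: ag; rewrite -E; apply/negP; exact: single_anti Hh.
  rewrite negb_and orbC; apply/orP; left.
  apply/negP => /andP[_ /forallP/(_ K0)]; rewrite r0 /= => /orP[].
    move=> /forallP H; move: ag; apply/negP; apply: (single_anti (x:=x)) => K1 r1.
    apply: subset_trans (Hh _ r0); by have := H K1; rewrite r1.
  move/forallP/(_ K); rewrite rK /= => /eqP E.
  have : x \in K :&: K0 :&: Q by rewrite !inE xK x0 xQ.
  by rewrite E inE.
have m1 : mcol adj Q h g = Some Dominance by rewrite /mcol at1 nid (negbTE nah).
by split=> //; rewrite mcolC.
Qed.

Theorem lemma4p3 (T : finType) (e : rel T) :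
  symmetric e -> irreflexive e -> (forall x y : T, connect e x y) ->
  forall Q : {set T + T}, clique_separator (plus_adj e) Q ->
  ((~ has_full_antipodal_triangle (plus_adj e) Q /\
    forall k : nat, 0 < k -> ~ induced_copy (wheel0 (k := k)) (plus_adj e) Q)
   <-> (forall k : nat, 0 < k -> ~ induced_copy (wheel0 (k := k)) (plus_adj e) Q)).
Proof.
move=> _ _ _ Q /andP[HQc _]; split; first by case.
move=> Hw; split=> //.
move=> [g1 [g2 [g3 [[G1 G2 G3] [[M12 M23 M13] [v vQ /and3P[N1 N2 N3]]]]]]].
have cQ : complete (plus_adj e) Q by case/maxsetP: HQc => /andP[].
have [_ nid12 an12] := mcol_antiP M12.
have [_ nid23 an23] := mcol_antiP M23.
have [_ nid13 an13] := mcol_antiP M13.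
case: v vQ N1 N2 N3 => [a|a] vQ N1 N2 N3; last first.
  by move: an12; apply/negP; apply: (@no_anti2 _ _ _ (inl a) (inr a)); apply: pendant cQ vQ.
have [raQ|naQ] := boolP (inr a \in Q).
  by move: an12; apply/negP; apply: (@no_anti2 _ _ _ (inl a) (inr a)); apply: pendant cQ raQ.
have [r0 Hh hG] := hub_facts cQ vQ naQ.
set h := [set inr a] :|: Q in r0 Hh hG.
have x0 : inl a \in [set inl a; inr a] by rewrite !inE eqxx.
have [nh1 mh1 m1h] := hub_ok r0 x0 vQ Hh N1 an12.
have [nh2 mh2 m2h] := hub_ok r0 x0 vQ Hh N2 (antipodal_sym an12).
have [nh3 mh3 m3h] := hub_ok r0 x0 vQ Hh N3 (antipodal_sym an13).
have M21 : mcol (plus_adj e) Q g2 g1 = Some Antipodal by rewrite mcolC.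
have M32 : mcol (plus_adj e) Q g3 g2 = Some Antipodal by rewrite mcolC.
have M31 : mcol (plus_adj e) Q g3 g1 = Some Antipodal by rewrite mcolC.
have nid21 : ~~ identified (plus_adj e) Q g2 g1 by rewrite identifiedC.
have nid32 : ~~ identified (plus_adj e) Q g3 g2 by rewrite identifiedC.
have nid31 : ~~ identified (plus_adj e) Q g3 g1 by rewrite identifiedC.
have n1h : ~~ identified (plus_adj e) Q g1 h by rewrite identifiedC.
have n2h : ~~ identified (plus_adj e) Q g2 h by rewrite identifiedC.
have n3h : ~~ identified (plus_adj e) Q g3 h by rewrite identifiedC.
apply: (Hw 1 isT).
exists (fun x : option 'I_(1.*2.+1) => match x with
  | None => h
  | Some i => if val i == 0 then g1 else if val i == 1 then g2 else g3 end).
split; first by case=> [[[|[|[|i]]] Hi]|].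
split.
  by case=> [[[|[|[|i]]] Hi]|] [[[|[|[|j]]] Hj]|].
by case=> [[[|[|[|i]]] Hi]|] [[[|[|[|j]]] Hj]|].
Qed.
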